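(* Let $g\ge1$ and $n\ge1$. For any $T_n\in\mathcal T_n$ there exists $\widehat T_n\in\mathcal T_n$ with $\hat w_n(\widehat T_n)>0$ such that $\widehat T_n$ covers $T_n$ and \[ C(T_n)\le C(\widehat T_n)\le (C(T_n)+1)L_{C(T_n),n}-1, \] where $L_{C,n}=\left\lceil\frac{\log n}{\lfloor\log(g+1)\rfloor}\right\rceil+1$ if $C=0$ and $L_{C,n}=\frac{\log\frac{n}{C+1}}{\lfloor\log(g+1)\rfloor}+2$ if $C\ge1$.
   Context: $\log$ is base 2. $\mathcal T_n$ is the set of transition paths $T=(t_1,\ldots,t_C;n)$ with $C\ge0$ and $1<t_1<\cdots<t_C\le n$; $C(T)=C$ is its number of switches. $\widehat T$ covers $T$ if every switch point of $T$ is a switch point of $\widehat T$. Weights: given switch probabilities $p(t|t')\in(0,1)$ for all $1\le t'<t$, let $U_1=1$ and $\Pr(U_t=t\mid U_{t-1}=t')=p(t|t')=1-\Pr(U_t=t'\mid U_{t-1}=t')$; a path $T\in\mathcal T_t$ corresponds to the realization jumping exactly at its switch points and $w_t(T)$ is its probability. Pruning with parameter $g$: write $s=o2^u$ with $o$ odd, $u\ge0$; $h_t(s)=1$ if $s\le t<s+g2^u$ and $0$ otherwise; $\hat p(t|t')=1-h_t(t')(1-p(t|t'))$; $\hat w_t$ is the Markov weight function defined from $\hat p$. *)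

(* Defs.v *)
From HB Require Import structures.
From mathcomp Require Import all_boot all_order all_algebra.
From mathcomp Require Import all_classical all_reals all_analysis.
Set Implicit Arguments. Unset Strict Implicit. Unset Printing Implicit Defensive.
Import Order.TTheory GRing.Theory Num.Theory.
Local Open Scope ring_scope.

(* Transition path T = (t_1,...,t_C; n) represented by the seq [:: t_1; ...; t_C]. *)
Definition is_tpath (n : nat) (s : seq nat) : bool :=
  sorted ltn s && all (fun t => (1 < t <= n)%N) s.

Definition nswitch (s : seq nat) : nat := size s.

Definition covers (Tcov T : seq nat) : Prop := {subset T <= Tcov}.

(* state U_{t-1} of the chain just before time t: last switch point < t, or 1 *)
Definition prev_state (s : seq nat) (t : nat) : nat :=
  last 1%N [seq x <- s | (x < t)%N].

(* Markov weight w_n(T) built from switch probabilities p(t|t') = p t t' *)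
Definition weight {R : realType} (p : nat -> nat -> R) (n : nat) (s : seq nat) : R :=
  \prod_(2 <= t < n.+1)
     (if t \in s then p t (prev_state s t) else 1 - p t (prev_state s t)).

(* h_t(s) with s = o 2^u, o odd : u = logn 2 s (2-adic valuation) *)
Definition hprune (g t s : nat) : bool :=
  (s <= t < s + g * 2 ^ logn 2 s)%N.

Definition phat {R : realType} (g : nat) (p : nat -> nat -> R) (t t' : nat) : R :=
  1 - (hprune g t t')%:R * (1 - p t t').

Definition log2 {R : realType} (x : R) : R := ln x / ln 2.

Definition Lbound {R : realType} (g C n : nat) : R :=
  let k : R := (Num.floor (log2 ((g.+1)%:R : R)))%:~R in
  if C == 0%N then (Num.ceil (log2 (n%:R : R) / k))%:~R + 1
  else log2 (n%:R / (C.+1)%:R : R) / k + 2.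

(* Main.v *)
Require Import Defs.
From HB Require Import structures.
From mathcomp Require Import all_boot all_order all_algebra.
From mathcomp Require Import all_classical all_reals all_analysis.
From mathcomp Require Import zify ring lra.
Import Order.TTheory GRing.Theory Num.Theory.
Set Implicit Arguments. Unset Strict Implicit. Unset Printing Implicit Defensive.

Definition Aup (d a : nat) : nat := ((a.-1) %/ d).+1 * d.

Lemma Aup_ge d a : (0 < d)%N -> (0 < a)%N -> (a <= Aup d a)%N.
Proof.
move=> d0 a0; rewrite /Aup.
have := divn_eq a.-1 d; have := ltn_pmod a.-1 d0.
set q := (a.-1 %/ d); set r := a.-1 %% d => hr he.
nia.
Qed.

Lemma Aup1 a : (0 < a)%N -> Aup 1 a = a.
Proof. move=> a0; rewrite /Aup divn1 muln1; lia. Qed.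

Lemma Aup_mono d K a : (0 < d)%N -> (0 < K)%N ->
  (Aup d a <= Aup (d * K) a <= Aup d a + (d * K - d))%N.
Proof.
move=> d0 K0; rewrite /Aup.
have dK0 : (0 < d * K)%N by rewrite muln_gt0 d0.
have := divn_eq a.-1 d; have := ltn_pmod a.-1 d0.
have := divn_eq a.-1 (d*K); have := ltn_pmod a.-1 dK0.
set q := (a.-1 %/ d); set r := a.-1 %% d.
set Q := (a.-1 %/ (d*K)); set R := a.-1 %% (d*K) => hR e1 hr e2.
have h1 : (q < Q.+1 * K)%N.
  rewrite -(ltn_pmul2r d0); nia.
have h2 : (Q * K < q.+1)%N.
  rewrite -(ltn_pmul2r d0); nia.
nia.
Qed.

Definition Ad (k j a : nat) : nat := Aup (2 ^ (j * k)) a.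
Definition Ncnt (k l : nat) : nat := up_log (2 ^ k) l.
Definition Ins (k a b : nat) : seq nat :=
  [seq x <- [seq Ad k j a | j <- iota 1 (Ncnt k (b - a))] | (a < x < b)%N].

Lemma Ad_val k i a : (0 < a)%N -> (2 ^ (i * k) <= 2 ^ logn 2 (Ad k i a))%N.
Proof.
move=> a0; have A0 : (0 < Ad k i a)%N.
  by apply: (leq_trans a0); apply: Aup_ge => //; rewrite expn_gt0.
apply: leq_pexp2l => //; rewrite -pfactor_dvdn //; exact: dvdn_mull.
Qed.

Lemma seg k g a b i : (1 <= k)%N -> (2 ^ k <= g.+1)%N -> (0 < a < b)%N ->
  (i <= Ncnt k (b - a))%N -> (Ad k i a < b)%N ->
  exists2 y, y \in b :: Ins k a b &
    (Ad k i a < y <= Ad k i a + g * 2 ^ (logn 2 (Ad k i a)))%N.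
Proof.
move=> k1 hk /andP[a0 ab].
set N := Ncnt k (b - a).
have K0 : (0 < 2 ^ k)%N by rewrite expn_gt0.
have K2 : (2 <= 2 ^ k)%N by have := leq_pexp2l (isT : (0 < 2)%N) k1; rewrite expn1.
have g1 : (1 <= g)%N by lia.
have hN : (b - a <= 2 ^ (N * k))%N.
  by rewrite mulnC expnM; apply: up_logP; have := leq_pexp2l (isT : (0 < 2)%N) k1; rewrite expn1.
have key : forall m i, N - i = m -> (i <= N)%N -> (Ad k i a < b)%N ->
  exists2 y, y \in b :: Ins k a b &
    (Ad k i a < y <= Ad k i a + g * 2 ^ (logn 2 (Ad k i a)))%N.
  elim=> [|m IH] {}i hm hiN hib.
  - have iN : i = N by lia.
    have hv := @Ad_val k i a a0.
    have hx : (a <= Ad k i a)%N by apply: Aup_ge => //; rewrite expn_gt0.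
    exists b; first exact: mem_head.
    rewrite hib /=; subst i.
    have : (b - Ad k N a <= g * 2 ^ logn 2 (Ad k N a))%N.
      apply: leq_trans (_ : b - a <= _)%N; first lia.
      apply: leq_trans hN _; apply: leq_trans hv _; rewrite leq_pmull //; lia.
    lia.
  - have hv := @Ad_val k i a a0.
    have hmono := @Aup_mono (2 ^ (i * k)) (2 ^ k) a (expn_gt0 2 (i * k)) K0.
    rewrite -/(Ad k i a) in hmono.
    have hstep : (2 ^ (i * k) * 2 ^ k - 2 ^ (i * k) <= g * 2 ^ logn 2 (Ad k i a))%N.
      apply: leq_trans (_ : 2 ^ (i * k) * g <= _)%N; first by rewrite -[X in (_ - X <= _)%N]muln1 -mulnBr leq_mul2l; apply/orP; right; lia.
      by rewrite mulnC leq_mul2l hv orbT.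
    have e : (2 ^ (i.+1 * k) = 2 ^ (i * k) * 2 ^ k)%N by rewrite mulSn expnD mulnC.
    rewrite -e -/(Ad k i.+1 a) in hmono.
    case: (leqP b (Ad k i.+1 a)) => hb.
      exists b; first exact: mem_head.
      rewrite hib /=; lia.
    case: (eqVneq (Ad k i.+1 a) (Ad k i a)) => he.
      rewrite -he; apply: IH; lia.
    exists (Ad k i.+1 a).
      rewrite inE; apply/orP; right.
      rewrite mem_filter; apply/andP; split.
        have hx : (a <= Ad k i a)%N by apply: Aup_ge => //; rewrite expn_gt0.
        apply/andP; split => //; lia.
      apply: map_f; rewrite mem_iota; lia.
    lia.
move=> hi hib; exact: (key (N - i) i).
Qed.

Lemma path_last_max x s : path leq x s -> forall y, y \in x :: s -> (y <= last x s)%N.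
Proof.
elim: s x => [|z s IH] x /=; first by move=> _ y; rewrite inE => /eqP ->.
move=> /andP[xz pz] y; rewrite inE => /orP[/eqP ->|ys].
  exact: leq_trans xz (IH z pz z (mem_head _ _)).
exact: IH.
Qed.

Lemma sorted_last_max d s y : sorted leq s -> y \in s -> (y <= last d s)%N.
Proof. case: s => [|z s] //= ps ys; exact: path_last_max. Qed.

Definition pairs (T : seq nat) (n : nat) := zip (1%N :: T) (rcons T n.+1).

Lemma zip_lt (x z : nat) s : path ltn x (rcons s z) ->
  forall pr, pr \in zip (x :: s) (rcons s z) -> (pr.1 < pr.2)%N.
Proof.
elim: s x => [|y s IH] x /=.
  by rewrite andbT => xz pr; rewrite inE => /eqP ->.
move=> /andP[xy py] pr; rewrite inE => /orP[/eqP ->//|]; exact: IH.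
Qed.

Lemma zip_fst (x z : nat) s y : y \in x :: s ->
  exists b, (y, b) \in zip (x :: s) (rcons s z).
Proof.
elim: s x => [|w s IH] x /=.
  by rewrite inE => /eqP ->; exists z; rewrite mem_head.
rewrite inE => /orP[/eqP ->|ys]; first by exists w; rewrite mem_head.
by have [b hb] := IH w ys; exists b; rewrite inE hb orbT.
Qed.

Lemma zip_mem (x z : nat) s pr : pr \in zip (x :: s) (rcons s z) ->
  pr.1 \in x :: s /\ pr.2 \in rcons s z.
Proof.
elim: s x => [|w s IH] x /=.
  by rewrite inE => /eqP -> /=; rewrite !mem_head.
rewrite inE => /orP[/eqP -> /=|hp]; first by rewrite !mem_head.
have [h1 h2] := IH w hp; split; first by rewrite inE h1 orbT.
by rewrite inE h2 orbT.
Qed.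

Definition Thseq (k : nat) (T : seq nat) (n : nat) : seq nat :=
  sort leq (undup (T ++ flatten [seq Ins k pr.1 pr.2 | pr <- pairs T n])).

Lemma mem_Th k T n x : x \in Thseq k T n =
  (x \in T) || (x \in flatten [seq Ins k pr.1 pr.2 | pr <- pairs T n]).
Proof. by rewrite /Thseq mem_sort mem_undup mem_cat. Qed.

Lemma tpath_ltn n T : (0 < n)%N -> is_tpath n T -> path ltn 1%N (rcons T n.+1).
Proof.
move=> n0 /andP[sT aT]; rewrite rcons_path; apply/andP; split.
  rewrite path_sortedE; last exact: ltn_trans.
  rewrite sT andbT; apply/allP => t tT; have := allP aT t tT; lia.
have : last 1%N T \in 1%N :: T by exact: mem_last.
rewrite inE => /orP[/eqP ->|lT]; first lia.
have := allP aT _ lT; lia.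
Qed.

Section Main.
Variables (k g n : nat) (T : seq nat).
Hypotheses (k1 : (1 <= k)%N) (hk : (2 ^ k <= g.+1)%N) (hn : (0 < n)%N) (hT : is_tpath n T).

Lemma pairs_prop pr : pr \in pairs T n ->
  [/\ (0 < pr.1)%N, (pr.1 < pr.2)%N, (pr.2 <= n.+1)%N, pr.1 \in 1%N :: T & pr.2 \in rcons T n.+1].
Proof.
move=> hp; have [h1 h2] := zip_mem hp.
have lt := zip_lt (tpath_ltn hn hT) hp.
move: hT => /andP[_ aT].
split => //.
- move: h1; rewrite inE => /orP[/eqP ->//|/(allP aT)]; lia.
- move: h2; rewrite mem_rcons inE => /orP[/eqP ->//|/(allP aT)]; lia.
Qed.

Lemma Th_bounds x : x \in Thseq k T n -> (1 < x <= n)%N.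
Proof.
rewrite mem_Th => /orP[xT|/flattenP[s /mapP[pr hp ->] hx]].
  by move: hT => /andP[_ /allP]; apply.
have [h1 h2 h3 _ _] := pairs_prop hp.
move: hx; rewrite mem_filter => /andP[/andP[u v] _].
by rewrite (leq_ltn_trans h1 u) -ltnS (leq_trans v h3).
Qed.

Lemma Th_valid x : x \in 1%N :: Thseq k T n ->
  exists2 y, y \in rcons (Thseq k T n) n.+1 &
    (x < y <= x + g * 2 ^ (logn 2 x))%N.
Proof.
have lift : forall pr y, pr \in pairs T n -> y \in pr.2 :: Ins k pr.1 pr.2 ->
    y \in rcons (Thseq k T n) n.+1.
  move=> pr y hp; have [_ _ _ _ h5] := pairs_prop hp.
  rewrite inE => /orP[/eqP ->|hy].
    move: h5; rewrite !mem_rcons !inE => /orP[->//|h]; by rewrite mem_Th h orbT.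
  rewrite mem_rcons inE mem_Th; apply/orP; right; apply/orP; right.
  by apply/flattenP; exists (Ins k pr.1 pr.2) => //; apply: map_f.
have case1 : forall z, z \in 1%N :: T -> exists2 y, y \in rcons (Thseq k T n) n.+1 &
    (z < y <= z + g * 2 ^ (logn 2 z))%N.
  move=> z zT; have [b hb] := zip_fst n.+1 zT.
  have [h1 h2 h3 _ _] := pairs_prop hb; rewrite /= in h1 h2 h3.
  have e0 : Ad k 0 z = z by rewrite /Ad mul0n expn0 Aup1.
  have := @seg k g z b 0 k1 hk; rewrite e0 h1 h2 /= => /(_ isT (leq0n _) isT) [y hy hxy].
  by exists y => //; apply: (lift (z, b)).
rewrite inE => /orP[/eqP ->|]; first by apply: case1; exact: mem_head.
rewrite mem_Th => /orP[xT|]; first by apply: case1; rewrite inE xT orbT.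
move=> /flattenP[s /mapP[pr hp ->] hx].
have [h1 h2 h3 _ _] := pairs_prop hp.
move: hx; rewrite mem_filter => /andP[/andP[ax xb] /mapP[j]].
rewrite mem_iota => /andP[j1 jN] ex.
have := @seg k g pr.1 pr.2 j k1 hk; rewrite h1 h2 -ex xb /=.
move=> /(_ isT _ isT) [|y hy hxy]; first lia.
by exists y => //; apply: (lift pr).
Qed.

Lemma Th_size : (size (Thseq k T n) <=
  size T + \sum_(pr <- pairs T n) Ncnt k (pr.2 - pr.1))%N.
Proof.
rewrite /Thseq size_sort; apply: leq_trans (size_undup _) _.
rewrite size_cat leq_add2l.
elim: (pairs T n) => [|pr P IH]; first by rewrite big_nil.
rewrite big_cons /= size_cat; apply: leq_add => //.
rewrite /Ins size_filter; apply: leq_trans (count_size _ _) _.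
by rewrite size_map size_iota.
Qed.

Lemma Th_tpath : is_tpath n (Thseq k T n).
Proof.
apply/andP; split.
  rewrite ltn_sorted_uniq_leq /Thseq sort_uniq undup_uniq /=.
  apply: sort_sorted; exact: leq_total.
by apply/allP => x /Th_bounds.
Qed.

Lemma Th_cover : covers (Thseq k T n) T.
Proof. by move=> x xT; rewrite mem_Th xT. Qed.

Lemma Th_size_ge : (size T <= size (Thseq k T n))%N.
Proof.
apply: uniq_leq_size; last exact: Th_cover.
by move: hT => /andP[sT _]; move: sT; rewrite ltn_sorted_uniq_leq => /andP[].
Qed.

End Main.

Local Open Scope ring_scope.

Lemma weight_pos (R : realType) (p : nat -> nat -> R)
  (hp : forall t t' : nat, (1 <= t' < t)%N -> 0 < p t t' < 1)
  (g n : nat) (s : seq nat) :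
  (forall x, x \in s -> (1 < x)%N) -> sorted leq s ->
  (forall x, x \in 1%N :: s -> exists2 y, y \in rcons s n.+1 &
    (x < y <= x + g * 2 ^ (logn 2 x))%N) ->
  0 < weight (phat g p) n s.
Proof.
move=> s1 ss V; rewrite /weight big_seq_cond; apply: prodr_gt0 => t.
rewrite mem_iota andbT => /andP[t2 tn].
move: t t2 tn; case=> [//|t] t2 tn.
have tn' : (t.+1 <= n)%N by lia.
set x := prev_state s t.+1.
have hx : x \in 1%N :: [seq y <- s | (y < t.+1)%N] by exact: mem_last.
have x1t : (1 <= x < t.+1)%N.
  move: hx; rewrite inE => /orP[/eqP ->|]; first lia.
  rewrite mem_filter => /andP[xt xs]; have := s1 _ xs; lia.
have xs : x \in 1%N :: s.
  move: hx; rewrite !inE => /orP[->//|]; rewrite mem_filter => /andP[_ ->].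
  by rewrite orbT.
have /andP[p0 p1] := hp t.+1 x x1t.
rewrite /phat; case: ifP => ts.
  case: (hprune g t.+1 x) => /=; rewrite ?mul1r ?mul0r ?subr0; last exact: ltr01.
  by rewrite opprB addrCA subrr addr0.
have hpr : hprune g t.+1 x.
  rewrite /hprune; apply/andP; split; first by move: x1t => /andP[_ /ltnW].
  rewrite ltnNge; apply/negP => hge.
  have [y ys /andP[xy yle]] := V x xs.
  have yn : (y <= n)%N by apply: leq_trans yle (leq_trans hge tn').
  have ys' : y \in s.
    move: ys; rewrite mem_rcons inE => /orP[/eqP e|//]; rewrite e in yn; lia.
  have yt : (y < t.+1)%N.
    rewrite ltn_neqAle (leq_trans yle hge) andbT; apply/negP => /eqP e.
    by rewrite -e ys' in ts.
  have : (y <= x)%N.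
    apply: sorted_last_max; first exact: (sorted_filter leq_trans).
    by rewrite mem_filter yt ys'.
  lia.
by rewrite hpr mul1r opprB addrCA subrr addr0 subr_gt0.
Qed.

Section Reals.
Variable R : realType.

Lemma ln2_gt0 : 0 < ln (2 : R).
Proof. by apply: ln_gt0; rewrite ltr1n. Qed.

Lemma ln_pow2 m : ln ((2 ^ m)%:R : R) = m%:R * ln 2.
Proof. by rewrite natrX lnXn // mulr_natl. Qed.

Lemma lt_log2 m l : (0 < l)%N -> (2 ^ m < l)%N -> m%:R < log2 (l%:R : R).
Proof.
move=> l0 h; rewrite /log2 ltr_pdivlMr ?ln2_gt0 // -ln_pow2.
by rewrite ltr_ln ?posrE ?ltr0n ?expn_gt0 // ltr_nat.
Qed.

Lemma le_log2 m l : (2 ^ m <= l)%N -> m%:R <= log2 (l%:R : R).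
Proof.
move=> h; have l0 : (0 < l)%N by apply: leq_trans h; rewrite expn_gt0.
rewrite /log2 ler_pdivlMr ?ln2_gt0 // -ln_pow2.
by rewrite ler_ln ?posrE ?ltr0n ?expn_gt0 // ler_nat.
Qed.

Lemma log2_lt m l : (0 < l)%N -> (l < 2 ^ m)%N -> log2 (l%:R : R) < m%:R.
Proof.
move=> l0 h; rewrite /log2 ltr_pdivrMr ?ln2_gt0 // -ln_pow2.
by rewrite ltr_ln ?posrE ?ltr0n ?expn_gt0 // ltr_nat.
Qed.

Lemma log2_ge0 l : (0 < l)%N -> 0 <= log2 (l%:R : R).
Proof. by move=> l0; have := @le_log2 0 l; rewrite expn0 => /(_ l0). Qed.

Lemma floor_k g : Num.floor (log2 ((g.+1)%:R : R)) = (trunc_log 2 g.+1)%:Z.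
Proof.
apply: floor_def; apply/andP; split.
  by apply: le_log2; apply: trunc_logP.
have -> : ((trunc_log 2 g.+1)%:Z + 1)%:~R = ((trunc_log 2 g.+1).+1)%:R :> R.
  by rewrite intrD -natr1.
by apply: log2_lt => //; apply: trunc_log_ltn.
Qed.

Lemma Ncnt_pred k l : (1 <= k)%N -> (0 < Ncnt k l)%N ->
  ((Ncnt k l).-1)%:R < log2 (l%:R : R) / k%:R.
Proof.
move=> k1 N0.
have K1 : (1 < 2 ^ k)%N by have := leq_pexp2l (isT : (0 < 2)%N) k1; rewrite expn1.
have l1 : (1 < l)%N by move: N0; rewrite /Ncnt up_log_gt0 => /andP[].
have := up_log_gtn K1 l1; rewrite -expnM -/(Ncnt k l) => h.
rewrite ltr_pdivlMr ?ltr0n //; rewrite -natrM mulnC.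
by apply: lt_log2 => //; lia.
Qed.

Lemma Ncnt_le1 k l : (1 <= k)%N -> (0 < l)%N ->
  (Ncnt k l)%:R <= 1 + log2 (l%:R : R) / k%:R.
Proof.
move=> k1 l0; case: (posnP (Ncnt k l)) => [->|N0].
  by apply: addr_ge0 => //; apply: divr_ge0; [exact: log2_ge0 | exact: ler0n].
rewrite -(prednK N0) -addn1 natrD addrC lerD2l.
exact/ltW/Ncnt_pred.
Qed.

Lemma Ncnt_ceil k l : (1 <= k)%N -> (0 < l)%N ->
  (Ncnt k l)%:R <= (Num.ceil (log2 (l%:R : R) / k%:R))%:~R :> R.
Proof.
move=> k1 l0; case: (posnP (Ncnt k l)) => [->|N0].
  by rewrite ler0z ceil_ge0; apply: lt_le_trans (divr_ge0 (log2_ge0 l0) (ler0n _ _)); rewrite ltrN10.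
have h := lt_le_trans (Ncnt_pred k1 N0) (ceil_ge _).
have : ((Ncnt k l).-1)%:Z < Num.ceil (log2 (l%:R : R) / k%:R).
  by rewrite -(ltr_int R).
move=> hh.
have : ((Ncnt k l)%:Z <= Num.ceil (log2 (l%:R : R) / k%:R))%R.
  move: hh N0; set c := Num.ceil _; set N := Ncnt k l; lia.
by rewrite -(ler_int R).
Qed.

Lemma ln_le_sub1 (x : R) : 0 < x -> ln x <= x - 1.
Proof.
move=> x0; have := expR_ge1Dx (ln x); rewrite lnK ?posrE //.
by rewrite -lerBrDl.
Qed.

Lemma sum_ln_le (I : eqType) (r : seq I) (f : I -> R) (S : R) :
  (0 < size r)%N -> (forall i, i \in r -> 0 < f i) -> \sum_(i <- r) f i = S ->
  \sum_(i <- r) ln (f i) <= (size r)%:R * ln (S / (size r)%:R).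
Proof.
move=> r0 fpos hS.
set m := S / (size r)%:R.
have S0 : 0 < S.
  rewrite -hS; case: r r0 fpos {hS m} => [//|i r] _ fpos.
  rewrite big_cons; apply: ltr_wpDr; last exact: fpos (mem_head _ _).
  by rewrite big_seq sumr_ge0 // => j jr; apply/ltW/fpos; rewrite inE jr orbT.
have m0 : 0 < m by rewrite divr_gt0 // ltr0n.
have step : forall i, i \in r -> ln (f i) - ln m <= f i / m - 1.
  move=> i ir; rewrite -ln_div ?posrE ?fpos //; apply: ln_le_sub1.
  by rewrite divr_gt0 ?fpos.
have : \sum_(i <- r) (ln (f i) - ln m) <= \sum_(i <- r) (f i / m - 1).
  by rewrite big_seq [X in _ <= X]big_seq; apply: ler_sum => i ir; apply: step.
have cst : forall c : R, \sum_(i <- r) c = (size r)%:R * c.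
  move=> c; elim: (r) => [|j s IH]; first by rewrite big_nil mul0r.
  by rewrite big_cons IH /= -addn1 natrD mulrDl mul1r addrC.
rewrite !sumrB -mulr_suml hS !cst.
have -> : S / m = (size r)%:R.
  by rewrite /m invf_div mulrC divfK // ?gt_eqF.
rewrite mulr1 subrr subr_le0 => h; exact: h.
Qed.

End Reals.

Lemma zip_sum (R : realType) (x z : nat) s :
  \sum_(pr <- zip (x :: s) (rcons s z)) (pr.2%:R - pr.1%:R : R) = z%:R - x%:R.
Proof.
elim: s x => [|y s IH] x /=; first by rewrite big_cons big_nil addr0.
by rewrite big_cons IH /= addrC addrA subrK.
Qed.

Lemma size_pairs T n : size (pairs T n) = (size T).+1.
Proof. by rewrite /pairs size_zip /= size_rcons minnn. Qed.

Unset Implicit Arguments. Set Strict Implicit.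

Theorem lemma4 (R : realType) (p : nat -> nat -> R)
  (hp : forall t t' : nat, (1 <= t' < t)%N -> 0 < p t t' < 1)
  (g n : nat) (hg : (1 <= g)%N) (hn : (1 <= n)%N)
  (T : seq nat) (hT : is_tpath n T) :
  exists Th : seq nat,
    [/\ is_tpath n Th,
        0 < weight (phat g p) n Th,
        covers Th T,
        (nswitch T <= nswitch Th)%N &
        (nswitch Th)%:R <= ((nswitch T).+1)%:R * Lbound g (nswitch T) n - 1 :> R].
Proof.
set k := trunc_log 2 g.+1.
have k1 : (1 <= k)%N by apply: trunc_log_max => //; rewrite expn1 ltnS.
have hk : (2 ^ k <= g.+1)%N by apply: trunc_logP.
have Thp := Th_tpath k1 hk hn hT.
exists (Thseq k T n); split.
- exact: Thp.
- apply: weight_pos => //.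
  + by move=> x /(Th_bounds k1 hk hn hT) /andP[].
  + by move: Thp => /andP[]; rewrite ltn_sorted_uniq_leq => /andP[].
  + exact: (Th_valid k1 hk hn hT).
- exact: (@Th_cover k n T).
- exact: (Th_size_ge k hT).
have hsz := @Th_size k n T.
rewrite /nswitch /Lbound floor_k -/k.
have -> : ((k%:Z)%:~R : R) = k%:R by [].
have kpos : (0 : R) < k%:R by rewrite ltr0n.
have hsz' : (size (Thseq k T n))%:R <= (size T)%:R +
    \sum_(pr <- pairs T n) (Ncnt k (pr.2 - pr.1))%:R :> R.
  by rewrite -natr_sum -natrD ler_nat.
have lpos : forall pr, pr \in pairs T n -> (0 < pr.2 - pr.1)%N.
  by move=> pr /(pairs_prop k1 hk hn hT) [_ h _ _ _]; rewrite subn_gt0.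
case: eqP => C0.
  have T0 : T = [::] by apply/size0nil.
  rewrite T0 /pairs /= big_cons big_nil addr0 add0r subn1 /= in hsz'.
  rewrite T0 /= mul1r addrK; apply: (le_trans hsz'); exact: Ncnt_ceil.
set L := log2 (n%:R / (size T).+1%:R : R) / k%:R.
have h1 : \sum_(pr <- pairs T n) (Ncnt k (pr.2 - pr.1))%:R <=
    \sum_(pr <- pairs T n) (1 + log2 ((pr.2 - pr.1)%:R : R) / k%:R).
  rewrite big_seq [X in _ <= X]big_seq; apply: ler_sum => pr hpr.
  by apply: Ncnt_le1 => //; apply: lpos.
have cst : forall c : R, \sum_(pr <- pairs T n) c = (size T).+1%:R * c.
  move=> c; rewrite -(size_pairs T n); elim: (pairs T n) => [|j s IH]; first by rewrite big_nil mul0r.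
  by rewrite big_cons IH /= -addn1 natrD mulrDl mul1r addrC.
rewrite big_split /= cst mulr1 in h1.
have hsum : \sum_(pr <- pairs T n) ((pr.2 - pr.1)%:R : R) = n%:R.
  rewrite big_seq (eq_bigr (fun pr => pr.2%:R - pr.1%:R)); last first.
    by move=> pr /lpos h; rewrite natrB //; apply: ltnW; rewrite -subn_gt0.
  by rewrite -big_seq zip_sum -natr1 addrK.
have hln := @sum_ln_le R _ (pairs T n) (fun pr => ((pr.2 - pr.1)%:R : R)) n%:R.
rewrite size_pairs /= in hln.
have pos : forall pr, pr \in pairs T n -> (0:R) < (pr.2 - pr.1)%:R.
  by move=> pr /lpos; rewrite ltr0n.
have hln' := hln isT pos hsum.
have h2 : \sum_(pr <- pairs T n) (log2 ((pr.2 - pr.1)%:R : R) / k%:R) <=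
    (size T).+1%:R * L.
  rewrite -mulr_suml /L mulrA ler_pM2r ?invr_gt0 //.
  rewrite /log2 -mulr_suml mulrA ler_pM2r ?invr_gt0 ?ln2_gt0 //.
rewrite mulrDr -natr1.
rewrite -natr1 in h1 h2.
lra.
Qed.
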